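(* Let $f:(0,\infty)\to(0,\infty)$ be non-increasing, let $a\ge0$, $b>0$, $c>0$, and define \[ F(r):=\int_0^\infty t^{-a}e^{-b^2t}e^{-\frac{r^2}{c^2t}}f(t)\,dt,\qquad r>0. \] If $t\mapsto t^2f(t)$ is non-decreasing, then \[ F(r)\asymp r^{-a+\frac12}\,f\!\left(\tfrac{r}{bc}\right)e^{-2bc^{-1}r}\quad\text{for all } r\ge1. \]
   Context: $g(r)\asymp h(r)$ for $r\in I$ means that $g(r)/h(r)$ stays between two positive constants (depending on $a,b,c,f$ but not on $r$) for all $r\in I$. *)

(* Defs.v *)
From Stdlib Require Import Reals.
Open Scope R_scope.

Definition improper_int_0_inf (g : R -> R) (l : R) : Prop :=
  (forall u v : R, 0 < u -> u <= v -> inhabited (Riemann_integrable g u v)) /\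
  (forall eps : R, 0 < eps ->
     exists d M : R, 0 < d /\ 0 < M /\
       forall (u v : R) (pr : Riemann_integrable g u v),
         0 < u -> u < d -> M < v -> Rabs (RiemannInt pr - l) < eps).

Definition integrand (f : R -> R) (a b c r : R) (t : R) : R :=
  Rpower t (- a) * exp (- (b ^ 2 * t)) * exp (- (r ^ 2 / (c ^ 2 * t))) * f t.

Definition comparison (f : R -> R) (a b c r : R) : R :=
  Rpower r (- a + 1 / 2) * f (r / (b * c)) * exp (- (2 * b / c * r)).

(* Main.v *)
Require Import Defs.
From Stdlib Require Import Reals.
From Stdlib Require Import Reals RList Lra Lia Psatz ClassicalEpsilon Classical.
From Coquelicot Require Import Coquelicot.

Open Scope R_scope.

Lemma SF_ext (f g : R -> R) (a b : R) : a <= b ->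
  (forall x, a < x < b -> f x = g x) -> IsStepFun f a b -> IsStepFun g a b.
Proof.
intros hab hfg [l [lf [Hord [H0 [H1 [Hlen Hc]]]]]].
exists l, lf. split; [exact Hord|]. split; [exact H0|]. split; [exact H1|].
split; [exact Hlen|].
intros i Hi x Hx. rewrite <- hfg. { exact (Hc i Hi x Hx). }
rewrite Rmin_left in H0 by exact hab. rewrite Rmax_right in H1 by exact hab.
destruct Hx as [Hx1 Hx2]. split.
- apply Rle_lt_trans with (pos_Rl l i); [|exact Hx1]. rewrite <- H0.
  apply RList_P5; [exact Hord|]. apply RList_P3. exists i. split; [reflexivity|lia].
- apply Rlt_le_trans with (pos_Rl l (S i)); [exact Hx2|]. rewrite <- H1.
  apply RList_P7; [exact Hord|]. apply RList_P3. exists (S i). split; [reflexivity|lia].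
Qed.

Lemma SF_int_ext (a b : R) (f g : StepFun a b) : a <= b ->
  (forall x, a < x < b -> f x = g x) -> RiemannInt_SF f = RiemannInt_SF g.
Proof.
intros hab H. apply Rle_antisym; apply StepFun_P37; auto;
 intros x Hx; rewrite (H x Hx); apply Rle_refl.
Qed.

Definition AP (g : R -> R) (a b e : R) : Prop :=
  exists (lo hi : StepFun a b), (forall t, a <= t <= b -> lo t <= g t <= hi t) /\
    RiemannInt_SF hi - RiemannInt_SF lo <= e.

Lemma AP_mono g a b e e' : AP g a b e -> e <= e' -> AP g a b e'.
Proof. intros [lo [hi [H1 H2]]] He. exists lo, hi. split; [exact H1|lra]. Qed.

Lemma AP_const g x y clo chi : x <= y ->
  (forall t, x <= t <= y -> clo <= g t <= chi) -> AP g x y ((chi - clo) * (y - x)).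
Proof.
intros hxy H. exists (mkStepFun (StepFun_P4 x y clo)), (mkStepFun (StepFun_P4 x y chi)).
split.
- intros t Ht. simpl. unfold fct_cte. apply H; exact Ht.
- rewrite !StepFun_P18. lra.
Qed.

Lemma AP_glue g a m b e1 e2 : a <= m <= b -> AP g a m e1 -> AP g m b e2 ->
  AP g a b (e1 + e2).
Proof.
intros [ham hmb] [lo1 [hi1 [B1 I1]]] [lo2 [hi2 [B2 I2]]].
set (lo := fun x => if Rle_dec x m then lo1 x else lo2 x).
set (hi := fun x => if Rle_dec x m then hi1 x else hi2 x).
assert (Slo1 : IsStepFun lo a m).
{ apply (SF_ext lo1 lo a m ham); [|exact (pre lo1)].
  intros x Hx. unfold lo. destruct (Rle_dec x m); [reflexivity|lra]. }
assert (Slo2 : IsStepFun lo m b).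
{ apply (SF_ext lo2 lo m b hmb); [|exact (pre lo2)].
  intros x Hx. unfold lo. destruct (Rle_dec x m); [lra|reflexivity]. }
assert (Shi1 : IsStepFun hi a m).
{ apply (SF_ext hi1 hi a m ham); [|exact (pre hi1)].
  intros x Hx. unfold hi. destruct (Rle_dec x m); [reflexivity|lra]. }
assert (Shi2 : IsStepFun hi m b).
{ apply (SF_ext hi2 hi m b hmb); [|exact (pre hi2)].
  intros x Hx. unfold hi. destruct (Rle_dec x m); [lra|reflexivity]. }
set (Slo := StepFun_P46 Slo1 Slo2). set (Shi := StepFun_P46 Shi1 Shi2).
exists (mkStepFun Slo), (mkStepFun Shi). split.
- intros t Ht. simpl. unfold lo, hi. destruct (Rle_dec t m).
  + apply B1; lra.
  + apply B2; lra.
- rewrite <- (StepFun_P43 Slo1 Slo2 Slo), <- (StepFun_P43 Shi1 Shi2 Shi).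
  assert (E1 : RiemannInt_SF (mkStepFun Slo1) = RiemannInt_SF lo1).
  { apply SF_int_ext; [exact ham|]. intros x Hx. simpl. unfold lo.
    destruct (Rle_dec x m); [reflexivity|lra]. }
  assert (E2 : RiemannInt_SF (mkStepFun Slo2) = RiemannInt_SF lo2).
  { apply SF_int_ext; [exact hmb|]. intros x Hx. simpl. unfold lo.
    destruct (Rle_dec x m); [lra|reflexivity]. }
  assert (E3 : RiemannInt_SF (mkStepFun Shi1) = RiemannInt_SF hi1).
  { apply SF_int_ext; [exact ham|]. intros x Hx. simpl. unfold hi.
    destruct (Rle_dec x m); [reflexivity|lra]. }
  assert (E4 : RiemannInt_SF (mkStepFun Shi2) = RiemannInt_SF hi2).
  { apply SF_int_ext; [exact hmb|]. intros x Hx. simpl. unfold hi.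
    destruct (Rle_dec x m); [lra|reflexivity]. }
  lra.
Qed.

Lemma AP_integrable g a b : a <= b -> (forall e, 0 < e -> AP g a b e) ->
  Riemann_integrable g a b.
Proof.
intros hab H eps.
assert (Hex : exists p : StepFun a b * StepFun a b,
  (forall t, a <= t <= b -> fst p t <= g t <= snd p t) /\
    RiemannInt_SF (snd p) - RiemannInt_SF (fst p) <= eps / 2).
{ destruct (H (eps/2)) as [lo [hi Hl]]. { destruct eps; simpl; lra. }
  exists (lo, hi). exact Hl. }
destruct (constructive_indefinite_description _ Hex) as [[lo hi] [B I]].
simpl in B, I.
exists lo. exists (mkStepFun (StepFun_P28 (-1) hi lo)). split.
- intros t Ht. rewrite Rmin_left, Rmax_right in Ht by exact hab. simpl.
  destruct (B t Ht). rewrite Rabs_pos_eq by lra. lra.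
- rewrite StepFun_P30.
  assert (0 <= RiemannInt_SF hi - RiemannInt_SF lo).
  { assert (RiemannInt_SF lo <= RiemannInt_SF hi).
    { apply StepFun_P37; [exact hab|]. intros x Hx. destruct (B x); lra. }
    lra. }
  rewrite Rabs_pos_eq by lra. destruct eps; simpl in *; lra.
Qed.

Lemma AP_chain g f a d H W n : 0 <= d ->
  (forall k, (k < n)%nat -> AP g (a + INR k * d) (a + INR k * d + d)
      (d * (H * (f (a + INR k * d) - f (a + INR k * d + d)) + W))) ->
  AP g a (a + INR n * d) (d * (H * (f a - f (a + INR n * d)) + INR n * W)).
Proof.
intros hd. induction n as [|n IH]; intros Hk.
- simpl. replace (a + 0 * d) with a by ring.
  apply AP_mono with ((g a - g a) * (a - a)).
  + apply AP_const; [lra|]. intros t Ht. replace t with a by lra. lra.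
  + lra.
- replace (a + INR (S n) * d) with (a + INR n * d + d) by (rewrite S_INR; ring).
  apply AP_mono with (d * (H * (f a - f (a + INR n * d)) + INR n * W) +
     d * (H * (f (a + INR n * d) - f (a + INR n * d + d)) + W)).
  + apply AP_glue with (a + INR n * d).
    * assert (0 <= INR n) by apply pos_INR. split; nra.
    * apply IH. intros k Hk'. apply Hk. lia.
    * apply Hk. lia.
  + rewrite S_INR. lra.
Qed.

Lemma AP_piece h f x d H M om : 0 <= d ->
  (forall t, x <= t <= x + d -> 0 <= h t <= H /\ Rabs (h t - h x) <= om) ->
  (forall t, x <= t <= x + d -> 0 < f t <= M) ->
  (forall s t, x <= s <= t -> t <= x + d -> f t <= f s) ->
  AP (fun t => h t * f t) x (x + d) (d * (H * (f x - f (x + d)) + 2 * om * M)).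
Proof.
intros hd Hh Hf Hmon.
apply AP_mono with (((h x + om) * f x - (h x - om) * f (x + d)) * (x + d - x)).
- apply AP_const; [lra|]. intros t Ht.
  destruct (Hh t Ht) as [[h0 hH] hom].
  assert (hom1 := Rle_trans _ _ _ (Rle_abs _) hom).
  assert (hom2 : -(h t - h x) <= om) by (rewrite <- Rabs_Ropp in hom; exact (Rle_trans _ _ _ (Rle_abs _) hom)).
  destruct (Hf t Ht) as [f0 fM].
  assert (A1 : f (x + d) <= f t) by (apply Hmon; lra).
  assert (A2 : f t <= f x) by (apply Hmon; lra).
  assert (A3 : 0 < f (x+d)) by (apply Hf; lra).
  split; nra.
- assert (Hx : x <= x <= x + d) by lra.
  destruct (Hh x Hx) as [[h0 hH] hom].
  rewrite Rminus_eq_0, Rabs_R0 in hom.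
  destruct (Hf x Hx) as [f0 fM].
  assert (Hxd : x <= x + d <= x + d) by lra.
  destruct (Hf (x+d) Hxd) as [f1 fM1].
  assert (A2 : f (x+d) <= f x) by (apply Hmon; lra).
  replace (x + d - x) with d by ring.
  assert (T1 : 0 <= d * ((H - h x) * (f x - f (x + d)))).
  { apply Rmult_le_pos; [exact hd|]. apply Rmult_le_pos; lra. }
  assert (T2 : 0 <= d * (om * ((M - f x) + (M - f (x + d))))).
  { apply Rmult_le_pos; [exact hd|]. apply Rmult_le_pos; lra. }
  nra.
Qed.

Lemma integ_prod (h f : R -> R) (u v H : R) : u <= v ->
  (forall t, u <= t <= v -> continuity_pt h t) ->
  (forall t, u <= t <= v -> 0 <= h t <= H) ->
  (forall t, u <= t <= v -> 0 < f t) ->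
  (forall s t, u <= s <= t -> t <= v -> f t <= f s) ->
  Riemann_integrable (fun t => h t * f t) u v.
Proof.
intros huv Hc Hh Hf Hmon. apply AP_integrable; [exact huv|].
intros e He. destruct (Req_dec u v) as [Euv|Nuv].
{ subst v. apply AP_mono with ((h u * f u - h u * f u) * (u - u)).
  - apply AP_const; [lra|]. intros t Ht. replace t with u by lra. lra.
  - lra. }
assert (huv' : u < v) by lra.
set (M := f u).
assert (HM : 0 < M) by (apply Hf; lra).
assert (HfM : forall t, u <= t <= v -> 0 < f t <= M).
{ intros t Ht. split; [apply Hf; exact Ht|]. apply Hmon; lra. }
assert (H0 : 0 <= H) by (destruct (Hh u); lra).
set (om := e / (4 * M * (v - u))).
assert (Hom : 0 < om).
{ unfold om. apply Rdiv_lt_0_compat; [lra|]. nra. }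
destruct (Heine_cor2 Hc (mkposreal om Hom)) as [del Hdel]. simpl in Hdel.
set (K := (v - u) / del + 2 * (v - u) * H * (f u - f v) / e + 1).
assert (HK : 0 < K).
{ unfold K. assert (0 <= (v - u) / del).
  { apply Rdiv_le_0_compat; [lra| destruct del; simpl; lra]. }
  assert (0 <= 2 * (v - u) * H * (f u - f v) / e).
  { apply Rdiv_le_0_compat; [|lra].
    assert (f v <= f u) by (apply Hmon; lra). 
    apply Rmult_le_pos; [nra|lra]. }
  lra. }
destruct (archimed_cor1 (/ K)) as [n [Hn Hn0]]. { apply Rinv_0_lt_compat; lra. }
assert (HnR : 0 < INR n) by (apply lt_0_INR; exact Hn0).
assert (HnK : K < INR n).
{ apply Rinv_lt_contravar in Hn.
  - rewrite !Rinv_inv in Hn. exact Hn.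
  - apply Rmult_lt_0_compat; apply Rinv_0_lt_compat; lra. }
set (d := (v - u) / INR n).
assert (Hd : 0 < d) by (unfold d; apply Rdiv_lt_0_compat; lra).
assert (Hnd : INR n * d = v - u) by (unfold d; field; lra).
assert (Hdd : d < del).
{ unfold d. assert (Hdel0 : 0 < del) by (destruct del; simpl; lra).
  apply Rmult_lt_reg_r with (INR n); [exact HnR|].
  unfold Rdiv. rewrite Rmult_assoc, Rinv_l by lra.
  assert ((v - u) / del < INR n).
  { apply Rle_lt_trans with K; [|exact HnK]. unfold K.
    assert (0 <= 2 * (v - u) * H * (f u - f v) / e).
    { apply Rdiv_le_0_compat; [|lra].
      assert (f v <= f u) by (apply Hmon; lra).
      apply Rmult_le_pos; [nra|lra]. }
    lra. }
  apply Rmult_lt_compat_r with (r := del) in H1; [|exact Hdel0].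
  unfold Rdiv in H1. rewrite Rmult_assoc, Rinv_l in H1 by lra. lra. }
assert (HdH : d * (H * (f u - f v)) <= e / 2).
{ assert (Hfuv : f v <= f u) by (apply Hmon; lra).
  assert (A : 2 * (v - u) * H * (f u - f v) / e < INR n).
  { apply Rle_lt_trans with K; [|exact HnK]. unfold K.
    assert (0 <= (v - u) / del).
    { apply Rdiv_le_0_compat; [lra| destruct del; simpl; lra]. }
    lra. }
  assert (A' : 2 * (v - u) * H * (f u - f v) <= INR n * e).
  { apply Rmult_lt_compat_r with (r := e) in A; [|lra].
    unfold Rdiv in A. rewrite Rmult_assoc, Rinv_l in A by lra. lra. }
  unfold d. apply Rmult_le_reg_r with (2 * INR n); [lra|].
  unfold Rdiv. 
  replace ((v - u) * / INR n * (H * (f u - f v)) * (2 * INR n))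
    with (2 * (v - u) * H * (f u - f v)) by (field; lra).
  replace (e * / 2 * (2 * INR n)) with (INR n * e) by field. lra. }
replace v with (u + INR n * d) by lra.
apply AP_mono with (d * (H * (f u - f (u + INR n * d)) + INR n * (2 * om * M))).
- apply AP_chain; [lra|]. intros k Hk.
  assert (Hk1 : 0 <= INR k) by apply pos_INR.
  assert (Hk2 : INR k + 1 <= INR n).
  { rewrite <- S_INR. apply le_INR. lia. }
  set (x := u + INR k * d).
  assert (Hx1 : u <= x) by (unfold x; nra).
  assert (Hx2 : x + d <= v) by (unfold x; nra).
  replace (2 * om * M) with (2 * om * M) by reflexivity.
  apply AP_piece; [lra| | |].
  + intros t Ht. split; [apply Hh; lra|].
    left. apply Hdel; try lra. rewrite Rabs_pos_eq; lra.
  + intros t Ht. apply HfM. lra.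
  + intros s t Hs Ht. apply Hmon; lra.
- rewrite Hnd. replace (u + (v - u)) with v by ring.
  assert (E : (v - u) * (2 * om * M) = e / 2).
  { unfold om. field. split; lra. }
  assert (d * (H * (f u - f v) + INR n * (2 * om * M)) =
          d * (H * (f u - f v)) + (INR n * d) * (2 * om * M)) by ring.
  rewrite H1, Hnd, E. lra.
Qed.

Lemma exp_le' x y : x <= y -> exp x <= exp y.
Proof. intros [H|H]; [left; apply exp_increasing; exact H|subst; lra]. Qed.

Lemma ln_le' x y : 0 < x -> x <= y -> ln x <= ln y.
Proof. intros Hx [H|H]; [left; apply ln_increasing; auto|subst; lra]. Qed.

Lemma alg_A b q s mu sm : 0 < b -> 0 < q -> 0 <= s -> 0 < mu -> mu <= b ->
  0 < sm -> sm <= q -> mu <= b ^ 2 * sm / 2 ->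
  mu / q * s - 1 / 2 <= b ^ 2 * s ^ 2 / (q ^ 2 + s).
Proof.
intros hb hq hs hmu hmub hsm hsmq hmu2.
assert (hb2 : 0 < b ^ 2) by (apply pow_lt; lra).
assert (Hd : 0 < q ^ 2 + s) by nra.
assert (Hz : mu / q * s <= b * s / q).
{ unfold Rdiv. replace (mu * / q * s) with (mu * s * / q) by ring.
  apply Rmult_le_compat_r; [left; apply Rinv_0_lt_compat; lra|nra]. }
destruct (Rle_dec s (q ^ 2)) as [Hs|Hs].
- set (y := b * s / q).
  assert (Hy : b ^ 2 * s ^ 2 / (q ^ 2 + s) >= y ^ 2 / 2).
  { unfold y. apply Rle_ge. unfold Rdiv.
    replace ((b * s * / q) ^ 2 * / 2) with (b^2 * s^2 * / (2 * q^2)) by (field; lra).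
    apply Rmult_le_compat_l; [nra|]. apply Rinv_le_contravar; [nra|lra]. }
  assert (y ^ 2 / 2 >= y - 1/2) by (assert (0 <= (y-1)^2) by apply pow2_ge_0; nra).
  unfold y in *. lra.
- assert (Hy : b ^ 2 * s ^ 2 / (q ^ 2 + s) >= b ^ 2 * s / 2).
  { apply Rle_ge. unfold Rdiv.
    replace (b ^ 2 * s * / 2) with (b^2 * s^2 * / (2 * s)) by (field; lra).
    apply Rmult_le_compat_l; [nra|]. apply Rinv_le_contravar; [nra|lra]. }
  assert (mu / q * s <= b ^ 2 * s / 2).
  { assert (mu / q <= b ^ 2 / 2).
    { apply Rmult_le_reg_r with q; [lra|]. unfold Rdiv.
      rewrite Rmult_assoc, Rinv_l by lra. nra. }
    nra. }
  lra.
Qed.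

Lemma alg_B b q t s mu : 0 < b -> 0 < q -> 0 < t -> t <= q ^ 2 -> 0 <= s -> 0 < mu -> mu <= b ->
  mu / q * s - 1 / 2 <= (b ^ 2 * s ^ 2 / t) / 2.
Proof.
intros hb hq ht htq hs hmu hmub.
assert (hb2 : 0 < b ^ 2) by (apply pow_lt; lra).
assert (Hz : mu / q * s <= b * s / q).
{ unfold Rdiv. replace (mu * / q * s) with (mu * s * / q) by ring.
  apply Rmult_le_compat_r; [left; apply Rinv_0_lt_compat; lra|nra]. }
set (y := b * s / q).
assert (Hy : b ^ 2 * s ^ 2 / t >= y ^ 2).
{ unfold y. apply Rle_ge. unfold Rdiv.
  replace ((b * s * / q) ^ 2) with (b^2 * s^2 * / (q^2)) by (field; lra).
  apply Rmult_le_compat_l; [nra|]. apply Rinv_le_contravar; [nra|lra]. }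
assert (y ^ 2 / 2 >= y - 1/2) by (assert (0 <= (y-1)^2) by apply pow2_ge_0; nra).
unfold y in *. lra.
Qed.

Lemma alg_C b t t0 tm m : 0 < b -> 0 < t -> t < t0 -> 0 < tm -> tm <= t0 -> 0 < m ->
  m * (ln t0 - ln t) <= (b ^ 2 * (t0 - t) ^ 2 / t) / 2 + 2 * (b ^ 2 * tm / 2)
     + m * Rabs (ln (m / (b ^ 2 * tm / 2))).
Proof.
intros hb ht htt0 htm htmt0 hm.
assert (hb2 : 0 < b ^ 2) by (apply pow_lt; lra).
set (beta := b ^ 2 * tm / 2).
assert (hbeta : 0 < beta) by (unfold beta; nra).
set (L := ln t0 - ln t).
assert (HL : exp L = t0 / t).
{ unfold L. unfold Rminus. rewrite exp_plus, exp_Ropp, !exp_ln by lra. reflexivity. }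
set (L0 := ln (m / beta)).
assert (HL0 : exp L0 = m / beta) by (unfold L0; rewrite exp_ln; [reflexivity|]; apply Rdiv_lt_0_compat; lra).
assert (Htan : beta * exp L >= m * (1 + L - L0)).
{ replace L with (L0 + (L - L0)) at 1 by ring. rewrite exp_plus, HL0.
  assert (H1 := exp_ineq1_le (L - L0)).
  apply Rle_ge. replace (beta * (m / beta * exp (L - L0))) with (m * exp (L - L0)) by (field; lra).
  apply Rmult_le_compat_l; lra. }
assert (HE : (b ^ 2 * (t0 - t) ^ 2 / t) / 2 >= beta * (t0 / t) - 2 * beta).
{ unfold beta. apply Rle_ge.
  replace (b ^ 2 * (t0 - t) ^ 2 / t / 2) with (b^2/2 * ((t0 - t)^2 / t)) by (field; lra).
  replace (b ^ 2 * tm / 2 * (t0 / t) - 2 * (b ^ 2 * tm / 2)) with (b^2/2 * (tm * (t0 - 2 * t) / t)) by (field; lra).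
  apply Rmult_le_compat_l; [nra|]. unfold Rdiv. apply Rmult_le_compat_r; [left; apply Rinv_0_lt_compat; lra|].
  destruct (Rle_dec 0 (t0 - 2 * t)); nra. }
rewrite <- HL in HE.
assert (m * L0 <= m * Rabs L0) by (apply Rmult_le_compat_l; [lra| apply Rle_abs]).
fold beta. fold L0. lra.
Qed.

Definition hh (a b c r t : R) :=
  Rpower t (-a) * exp (- (b ^ 2 * t)) * exp (- (r ^ 2 / (c ^ 2 * t))).

Lemma hh_exp a b c r t t0 : 0 < b -> 0 < c -> 0 < t -> t0 = r / (b * c) ->
  hh a b c r t = exp (- a * ln t - 2 * b / c * r - b ^ 2 * (t - t0) ^ 2 / t).
Proof.
intros hb hc ht Ht0. unfold hh, Rpower. rewrite <- !exp_plus. f_equal.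
subst t0. field. repeat split; lra.
Qed.

Lemma upper_pt (f : R -> R) (a b c r t0 q sm mu tm Lc t : R)
  (hf_noninc : forall s t, 0 < s -> s <= t -> f t <= f s)
  (ht2f : forall s t, 0 < s -> s <= t -> s ^ 2 * f s <= t ^ 2 * f t)
  (hf_pos : forall t, 0 < t -> 0 < f t)
  (ha : 0 <= a) (hb : 0 < b) (hc : 0 < c)
  (Ht0 : t0 = r / (b * c)) (hq : 0 < q) (hq2 : q ^ 2 = t0)
  (hsm : 0 < sm) (hsmq : sm <= q)
  (hmu0 : 0 < mu) (hmub : mu <= b) (hmu2 : mu <= b ^ 2 * sm / 2)
  (htm0 : 0 < tm) (htmt0 : tm <= t0)
  (HLc : Lc = 1 / 2 + 2 * (b ^ 2 * tm / 2) + (a + 2) * Rabs (ln ((a + 2) / (b ^ 2 * tm / 2))))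
  (ht : 0 < t) :
  hh a b c r t * f t <= f t0 * exp (- a * ln t0 - 2 * b / c * r + Lc - mu / q * Rabs (t - t0)).
Proof.
assert (hb2 : 0 < b ^ 2) by (apply pow_lt; lra).
assert (ht0 : 0 < t0) by lra.
rewrite (hh_exp a b c r t t0 hb hc ht Ht0).
assert (hLc : 1 / 2 <= Lc).
{ rewrite HLc. assert (0 <= (a + 2) * Rabs (ln ((a + 2) / (b ^ 2 * tm / 2)))).
  { apply Rmult_le_pos; [lra|apply Rabs_pos]. }
  assert (0 <= b ^ 2 * tm) by nra. lra. }
assert (hft : 0 < f t) by (apply hf_pos; exact ht).
assert (hft0 : 0 < f t0) by (apply hf_pos; exact ht0).
destruct (Rle_dec t0 t) as [Hle|Hlt].
- assert (Hf : f t <= f t0) by (apply hf_noninc; lra).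
  rewrite Rabs_pos_eq by lra.
  rewrite Rmult_comm. apply Rmult_le_compat; [lra|left; apply exp_pos|exact Hf|].
  apply exp_le'.
  assert (A1 : a * ln t0 <= a * ln t) by (apply Rmult_le_compat_l; [exact ha| apply ln_le'; lra]).
  assert (A2 := alg_A b q (t - t0) mu sm hb hq ltac:(lra) hmu0 hmub hsm hsmq hmu2).
  replace (q ^ 2 + (t - t0)) with t in A2 by (rewrite hq2; ring).
  lra.
- assert (Hf : f t <= f t0 * exp (2 * (ln t0 - ln t))).
  { assert (E2 : exp (2 * (ln t0 - ln t)) = t0 ^ 2 / t ^ 2).
    { replace (2 * (ln t0 - ln t)) with ((ln t0 - ln t) + (ln t0 - ln t)) by ring.
      rewrite exp_plus. unfold Rminus. rewrite exp_plus, exp_Ropp, !exp_ln by lra.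
      field. lra. }
    rewrite E2. assert (H2 := ht2f t t0 ht ltac:(lra)).
    assert (0 < t ^ 2) by (apply pow_lt; lra).
    apply Rmult_le_reg_r with (t ^ 2); [lra|].
    replace (f t0 * (t0 ^ 2 / t ^ 2) * t ^ 2) with (t0 ^ 2 * f t0) by (field; lra). lra. }
  rewrite Rabs_left by lra.
  apply Rle_trans with (exp (- a * ln t - 2 * b / c * r - b ^ 2 * (t - t0) ^ 2 / t) *
                        (f t0 * exp (2 * (ln t0 - ln t)))).
  { apply Rmult_le_compat_l; [left; apply exp_pos|exact Hf]. }
  replace (exp (- a * ln t - 2 * b / c * r - b ^ 2 * (t - t0) ^ 2 / t) *
             (f t0 * exp (2 * (ln t0 - ln t))))
    with (f t0 * exp (- a * ln t - 2 * b / c * r - b ^ 2 * (t - t0) ^ 2 / t + 2 * (ln t0 - ln t)))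
    by (rewrite exp_plus; ring).
  apply Rmult_le_compat_l; [lra|]. apply exp_le'.
  assert (B := alg_B b q t (t0 - t) mu hb hq ht ltac:(lra) ltac:(lra) hmu0 hmub).
  assert (C := alg_C b t t0 tm (a + 2) hb ht ltac:(lra) htm0 htmt0 ltac:(lra)).
  replace ((t - t0) ^ 2) with ((t0 - t) ^ 2) by ring.
  rewrite HLc. lra.
Qed.

Lemma lower_pt (f : R -> R) (a b c r t0 q sm kap t : R)
  (hf_noninc : forall s t, 0 < s -> s <= t -> f t <= f s)
  (ht2f : forall s t, 0 < s -> s <= t -> s ^ 2 * f s <= t ^ 2 * f t)
  (hf_pos : forall t, 0 < t -> 0 < f t)
  (ha : 0 <= a) (hb : 0 < b) (hc : 0 < c)
  (Ht0 : t0 = r / (b * c)) (hq : 0 < q) (hq2 : q ^ 2 = t0)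
  (hsmq : sm <= q) (hkap : 0 < kap) (hkap1 : kap <= sm) (hkap2 : kap <= 1 / b)
  (ht : t0 <= t <= t0 + kap * q) :
  exp (- a * ln 2 - a * ln t0 - 2 * b / c * r - 1) * (f t0 / 4) <= hh a b c r t * f t.
Proof.
assert (hb2 : 0 < b ^ 2) by (apply pow_lt; lra).
assert (ht0 : 0 < t0) by (rewrite <- hq2; apply pow_lt; lra).
assert (htp : 0 < t) by lra.
rewrite (hh_exp a b c r t t0 hb hc htp Ht0).
assert (Hw : kap * q <= t0) by (rewrite <- hq2; nra).
assert (Hf2 : f t0 / 4 <= f (2 * t0)).
{ assert (H := ht2f t0 (2 * t0) ht0 ltac:(lra)).
  assert (0 < t0 ^ 2) by (apply pow_lt; lra). nra. }
assert (Hf : f t0 / 4 <= f t).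
{ apply Rle_trans with (f (2 * t0)); [exact Hf2|]. apply hf_noninc; lra. }
apply Rmult_le_compat; [left; apply exp_pos| assert (0 < f t0) by (apply hf_pos; lra); lra | |exact Hf].
apply exp_le'.
assert (A1 : a * ln t <= a * ln 2 + a * ln t0).
{ rewrite <- Rmult_plus_distr_l, <- ln_mult by lra.
  apply Rmult_le_compat_l; [exact ha|]. apply ln_le'; lra. }
assert (A2 : b ^ 2 * (t - t0) ^ 2 / t <= 1).
{ assert (Hbk : b * kap <= 1).
  { apply Rmult_le_reg_r with (/ b); [apply Rinv_0_lt_compat; lra|].
    replace (b * kap * / b) with kap by (field; lra). lra. }
  assert (Hbt : b * (t - t0) <= q) by nra.
  assert (Hbt0 : 0 <= b * (t - t0)) by nra.
  assert (b ^ 2 * (t - t0) ^ 2 <= t) by nra.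
  apply Rmult_le_reg_r with t; [lra|]. unfold Rdiv.
  rewrite Rmult_assoc, Rinv_l by lra. lra. }
lra.
Qed.
Lemma RInt_sech A lam t0 u v : 0 < lam -> u <= v ->
  is_RInt (fun t => A * (2 / (exp (lam * (t - t0)) + exp (- (lam * (t - t0))))) ) u v
    (2 * A / lam * (atan (exp (lam * (v - t0))) - atan (exp (lam * (u - t0))))).
Proof.
intros hl huv.
replace (2 * A / lam * (atan (exp (lam * (v - t0))) - atan (exp (lam * (u - t0)))))
  with (minus (2 * A / lam * atan (exp (lam * (v - t0)))) (2 * A / lam * atan (exp (lam * (u - t0))))).
2: { unfold minus, plus, opp. simpl. ring. }
apply (is_RInt_derive (fun t => 2 * A / lam * atan (exp (lam * (t - t0))))).
- intros x _. auto_derive; [exact I|].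
  unfold Rminus. rewrite exp_Ropp.
  assert (HE : 0 < exp (lam * (x + - t0))) by apply exp_pos.
  set (E := exp (lam * (x + - t0))) in *.
  field. split; [lra|split; [nra|lra]].
- intros y _.
  apply (ex_derive_continuous (fun t => A * (2 / (exp (lam * (t - t0)) + exp (- (lam * (t - t0))))))).
  auto_derive. assert (0 < exp (lam * (y - t0))) by apply exp_pos.
  assert (0 < exp (- (lam * (y - t0)))) by apply exp_pos. unfold Rminus in *. lra.
Qed.

Lemma hh_cont a b c r t : 0 < c -> 0 < t -> continuity_pt (hh a b c r) t.
Proof.
intros hc ht. apply continuity_pt_filterlim.
apply (ex_derive_continuous (hh a b c r)). unfold hh, Rpower. auto_derive.
repeat split; try lra.
assert (0 < c) by lra. assert (0 < c * (c * 1) * t) by (apply Rmult_lt_0_compat; [nra|lra]). lra.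
Qed.

Lemma hh_pos a b c r t : 0 < t -> 0 < hh a b c r t.
Proof.
intros ht. unfold hh, Rpower. apply Rmult_lt_0_compat; [apply Rmult_lt_0_compat|]; apply exp_pos.
Qed.

Lemma hh_le a b c r u t : 0 <= a -> 0 < c -> 0 < u -> u <= t -> hh a b c r t <= Rpower u (- a).
Proof.
intros ha hc hu hut. unfold hh, Rpower.
assert (E1 : exp (- a * ln t) <= exp (- a * ln u)).
{ apply exp_le'. assert (ln u <= ln t) by (apply ln_le'; lra). nra. }
assert (E2 : exp (- (b ^ 2 * t)) <= 1).
{ rewrite <- exp_0. apply exp_le'. assert (0 <= b ^ 2) by apply pow2_ge_0. nra. }
assert (E3 : exp (- (r ^ 2 / (c ^ 2 * t))) <= 1).
{ rewrite <- exp_0. apply exp_le'. assert (0 <= r ^ 2 / (c ^ 2 * t)).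
  { apply Rdiv_le_0_compat; [apply pow2_ge_0|]. assert (0 < c ^ 2) by (apply pow_lt; lra).
    apply Rmult_lt_0_compat; lra. }
  lra. }
assert (P1 := exp_pos (- a * ln t)). assert (P2 := exp_pos (- (b ^ 2 * t))).
assert (P3 := exp_pos (- (r ^ 2 / (c ^ 2 * t)))).
apply Rle_trans with (exp (- a * ln t) * 1 * 1); [|lra].
apply Rmult_le_compat; try nra.
Qed.

Lemma inv_le_sech X : 1 <= X -> / X <= 2 / (X + / X).
Proof.
intros hX.
assert (E : 2 / (X + / X) - / X = (X * X - 1) / (X * (X * X + 1))) by (field; split; nra).
assert (0 <= (X * X - 1) / (X * (X * X + 1))).
{ apply Rdiv_le_0_compat; nra. }
lra.
Qed.

Lemma sech_ge K lam s : 0 < lam ->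
  exp (K - lam * Rabs s) <= exp K * (2 / (exp (lam * s) + exp (- (lam * s)))).
Proof.
intros hl. unfold Rminus. rewrite exp_plus. apply Rmult_le_compat_l; [left; apply exp_pos|].
destruct (Rle_dec 0 s) as [Hs|Hs].
- rewrite Rabs_pos_eq by lra. rewrite exp_Ropp. apply inv_le_sech.
  rewrite <- exp_0. apply exp_le'. nra.
- rewrite Rabs_left by lra.
  replace (- (lam * - s)) with (lam * s) by ring.
  assert (E : exp (lam * s) = / exp (- (lam * s))).
  { rewrite exp_Ropp, Rinv_inv. reflexivity. }
  rewrite E, Rplus_comm. apply inv_le_sech.
  rewrite <- exp_0. apply exp_le'. nra.
Qed.

Theorem lemmaA1 (f : R -> R) (a b c : R)
  (hf_pos : forall t, 0 < t -> 0 < f t)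
  (hf_noninc : forall s t, 0 < s -> s <= t -> f t <= f s)
  (ha : 0 <= a) (hb : 0 < b) (hc : 0 < c)
  (ht2f : forall s t, 0 < s -> s <= t -> s ^ 2 * f s <= t ^ 2 * f t) :
  exists C1 C2 : R, 0 < C1 /\ 0 < C2 /\
    forall r : R, 1 <= r ->
      exists F : R, improper_int_0_inf (integrand f a b c r) F /\
        C1 * comparison f a b c r <= F /\ F <= C2 * comparison f a b c r.
Proof.
assert (hb2 : 0 < b ^ 2) by (apply pow_lt; lra).
assert (hbc : 0 < b * c) by (apply Rmult_lt_0_compat; lra).
set (tm := 1 / (b * c)).
assert (htm : 0 < tm) by (unfold tm; apply Rdiv_lt_0_compat; lra).
set (sm := exp (ln tm / 2)).
assert (hsm : 0 < sm) by apply exp_pos.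
set (mu := Rmin b (b ^ 2 * sm / 2)).
assert (hmu : 0 < mu) by (apply Rmin_pos; [lra| assert (0 < b^2 * sm) by (apply Rmult_lt_0_compat; lra); lra]).
set (kap := Rmin sm (1 / b)).
assert (hkap : 0 < kap) by (apply Rmin_pos; [lra| apply Rdiv_lt_0_compat; lra]).
set (Lc := 1 / 2 + 2 * (b ^ 2 * tm / 2) + (a + 2) * Rabs (ln ((a + 2) / (b ^ 2 * tm / 2)))).
set (D := exp (- (- a + 1 / 2) * ln (b * c))).
assert (hD : 0 < D) by apply exp_pos.
exists (kap * exp (- a * ln 2 - 1) / 4 * D), (exp Lc * PI / mu * D).
split; [| split].
{ assert (0 < exp (- a * ln 2 - 1)) by apply exp_pos.
  apply Rmult_lt_0_compat; [|exact hD]. apply Rdiv_lt_0_compat; [|lra].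
  apply Rmult_lt_0_compat; lra. }
{ assert (0 < exp Lc) by apply exp_pos. assert (0 < PI) by apply PI_RGT_0.
  apply Rmult_lt_0_compat; [|exact hD]. apply Rdiv_lt_0_compat; [|lra].
  apply Rmult_lt_0_compat; lra. }
intros r hr.
set (t0 := r / (b * c)).
assert (Ht0 : t0 = r / (b * c)) by reflexivity.
assert (ht0 : 0 < t0) by (unfold t0; apply Rdiv_lt_0_compat; lra).
assert (htmt0 : tm <= t0).
{ unfold tm, t0, Rdiv. apply Rmult_le_compat_r; [left; apply Rinv_0_lt_compat; lra|lra]. }
set (q := exp (ln t0 / 2)).
assert (hq : 0 < q) by apply exp_pos.
assert (hq2 : q ^ 2 = t0).
{ unfold q. simpl. rewrite Rmult_1_r, <- exp_plus.
  replace (ln t0 / 2 + ln t0 / 2) with (ln t0) by field. apply exp_ln. exact ht0. }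
assert (hsmq : sm <= q).
{ unfold sm, q. apply exp_le'. assert (ln tm <= ln t0) by (apply ln_le'; lra). lra. }
assert (KI : exp (- a * ln t0) * q = Rpower r (- a + 1 / 2) * D).
{ unfold q, D, Rpower. rewrite <- !exp_plus. f_equal.
  assert (ln t0 = ln r - ln (b * c)).
  { unfold t0, Rdiv. rewrite ln_mult, ln_Rinv; [ring|lra|lra|].
    apply Rinv_0_lt_compat; lra. }
  rewrite H. field. }
set (g := integrand f a b c r).
assert (Hg : forall t, g t = hh a b c r t * f t) by reflexivity.
assert (Hint : forall u v, 0 < u -> u <= v -> Riemann_integrable g u v).
{ intros u v hu huv.
  exact (integ_prod (hh a b c r) f u v (Rpower u (- a)) huv
    (fun t Ht => hh_cont a b c r t hc ltac:(lra))
    (fun t Ht => conj (Rlt_le _ _ (hh_pos a b c r t ltac:(lra))) (hh_le a b c r u t ha hc hu (proj1 Ht)))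
    (fun t Ht => hf_pos t ltac:(lra))
    (fun s t Hs Ht => hf_noninc s t ltac:(lra) (proj2 Hs))). }
assert (Hex : forall u v, 0 < u -> u <= v -> ex_RInt g u v).
{ intros u v hu huv. apply ex_RInt_Reals_1. apply Hint; assumption. }
assert (Hgpos : forall t, 0 < t -> 0 <= g t).
{ intros t ht. rewrite Hg. apply Rmult_le_pos; left; [apply hh_pos|apply hf_pos]; lra. }
assert (Hmono : forall u v u' v', 0 < u -> u <= u' -> u' <= v' -> v' <= v ->
          RInt g u' v' <= RInt g u v).
{ intros u v u' v' hu h1 h2 h3.
  assert (E1 : RInt g u v = RInt g u u' + RInt g u' v' + RInt g v' v).
  { rewrite <- (RInt_Chasles g u v' v); [| apply Hex; lra | apply Hex; lra].
    rewrite <- (RInt_Chasles g u u' v'); [| apply Hex; lra | apply Hex; lra].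
    reflexivity. }
  assert (0 <= RInt g u u') by (apply RInt_ge_0; [lra|apply Hex; lra|intros x Hx; apply Hgpos; lra]).
  assert (0 <= RInt g v' v) by (apply RInt_ge_0; [lra|apply Hex; lra|intros x Hx; apply Hgpos; lra]).
  lra. }
set (lam := mu / q).
assert (hlam : 0 < lam) by (unfold lam; apply Rdiv_lt_0_compat; lra).
set (A2 := f t0 * exp (- a * ln t0 - 2 * b / c * r + Lc)).
assert (hA2 : 0 < A2) by (unfold A2; apply Rmult_lt_0_compat; [apply hf_pos; lra|apply exp_pos]).
set (U := 2 * A2 / lam * (PI / 2)).
set (G := fun t => A2 * (2 / (exp (lam * (t - t0)) + exp (- (lam * (t - t0)))))).
assert (Hup : forall u v, 0 < u -> u <= v -> RInt g u v <= U).
{ intros u v hu huv.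
  assert (HG := RInt_sech A2 lam t0 u v hlam huv).
  apply Rle_trans with (RInt G u v).
  - apply RInt_le; [exact huv| apply Hex; lra | exists (2 * A2 / lam * (atan (exp (lam * (v - t0))) - atan (exp (lam * (u - t0))))); exact HG |].
    intros x Hx. rewrite Hg. unfold G.
    apply Rle_trans with (f t0 * exp (- a * ln t0 - 2 * b / c * r + Lc - mu / q * Rabs (x - t0))).
    + apply (upper_pt f a b c r t0 q sm mu tm Lc x hf_noninc ht2f hf_pos ha hb hc Ht0 hq hq2 hsm hsmq hmu
               (Rmin_l _ _) (Rmin_r _ _) htm htmt0 eq_refl ltac:(lra)).
    + unfold A2. rewrite Rmult_assoc. apply Rmult_le_compat_l; [left; apply hf_pos; lra|].
      apply sech_ge. exact hlam.
  - unfold G. rewrite (is_RInt_unique _ _ _ _ HG). unfold U.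
    apply Rmult_le_compat_l.
    { left. apply Rdiv_lt_0_compat; lra. }
    destruct (atan_bound (exp (lam * (v - t0)))) as [_ H1].
    assert (H2 : atan 0 < atan (exp (lam * (u - t0)))) by (apply atan_increasing; apply exp_pos).
    rewrite atan_0 in H2. lra. }
set (S := fun y => exists u v, 0 < u /\ u <= v /\ y = RInt g u v).
assert (HSb : bound S).
{ exists U. intros y [u [v [hu [huv Hy]]]]. rewrite Hy. apply Hup; assumption. }
assert (HSn : exists y, S y).
{ exists (RInt g 1 1). exists 1, 1. split; [lra|split; [lra|reflexivity]]. }
destruct (completeness S HSb HSn) as [F [HF1 HF2]].
exists F. split; [split|split].
- intros u v hu huv. constructor. apply Hint; assumption.
- intros eps heps.
  assert (Hy : exists y, S y /\ F - eps < y).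
  { destruct (classic (exists y, S y /\ F - eps < y)) as [H|H]; [exact H|].
    exfalso. assert (HU : is_upper_bound S (F - eps)).
    { intros y Sy. destruct (Rle_dec y (F - eps)) as [Hle|Hnle]; [exact Hle|].
      exfalso. apply H. exists y. split; [exact Sy|lra]. }
    assert (HF2' := HF2 _ HU). lra. }
  destruct Hy as [y [[u1 [v1 [hu1 [huv1 Hy1]]]] Hlt]].
  exists u1, v1. split; [exact hu1|]. split; [lra|].
  intros u v pr hu hud hvM.
  rewrite <- (RInt_Reals g u v pr).
  assert (A1 : RInt g u1 v1 <= RInt g u v) by (apply Hmono; lra).
  assert (A2' : RInt g u v <= F) by (apply HF1; exists u, v; split; [lra|split; [lra|reflexivity]]).
  apply Rabs_def1; lra.
- set (w := kap * q).
  set (L0 := exp (- a * ln 2 - a * ln t0 - 2 * b / c * r - 1) * (f t0 / 4)).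
  assert (Hw : 0 < w) by (unfold w; apply Rmult_lt_0_compat; lra).
  assert (Hlow : L0 * w <= RInt g t0 (t0 + w)).
  { assert (E : RInt (fun _ => L0) t0 (t0 + w) = L0 * w).
    { rewrite RInt_const. unfold scal. simpl. unfold mult. simpl. ring. }
    rewrite <- E. apply RInt_le; [lra| apply ex_RInt_const| apply Hex; lra|].
    intros x Hx. rewrite Hg.
    apply (lower_pt f a b c r t0 q sm kap x hf_noninc ht2f hf_pos ha hb hc Ht0 hq hq2 hsmq hkap
             (Rmin_l _ _) (Rmin_r _ _)). unfold w in Hx. lra. }
  assert (HF : RInt g t0 (t0 + w) <= F) by (apply HF1; exists t0, (t0 + w); split; [lra|split; [lra|reflexivity]]).
  apply Rle_trans with (L0 * w); [|lra].
  right. unfold L0, w, comparison. fold t0.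
  replace (- a * ln 2 - a * ln t0 - 2 * b / c * r - 1) with ((- a * ln 2 - 1) + (- a * ln t0) + (- (2 * b / c * r))) by ring.
  rewrite !exp_plus.
  assert (KI' : Rpower r (- a + 1 / 2) = exp (- a * ln t0) * q / D) by (rewrite KI; field; lra).
  rewrite KI'. field. lra.
- apply HF2. intros y [u [v [hu [huv Hy]]]]. rewrite Hy.
  apply Rle_trans with U; [apply Hup; assumption|].
  right. unfold U, A2, lam, comparison. fold t0.
  replace (- a * ln t0 - 2 * b / c * r + Lc) with ((- a * ln t0) + (- (2 * b / c * r)) + Lc) by ring.
  rewrite !exp_plus.
  assert (KI' : Rpower r (- a + 1 / 2) = exp (- a * ln t0) * q / D) by (rewrite KI; field; lra).
  rewrite KI'. field. split; lra.
Qed.
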